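(* Let $A$ be a finite abelian group and let $G=A\rtimes(\mathbb{Z}/2\mathbb{Z})$ be a semidirect product. Then $G$ is mixable if and only if $G$ is $2'$-simple.
   Context: A finite group $G$ is mixable if there exist fixed elements $g_1,\dots,g_k\in G$ and independent Bernoulli random variables $\epsilon_i\sim\mathrm{Ber}(p_i)$, $p_i\in[0,1]$, such that the random product $g_1^{\epsilon_1}\cdots g_k^{\epsilon_k}$ is distributed exactly uniformly on $G$. A finite group is $2'$-simple if it has no proper normal subgroup of odd index (equivalently, no nontrivial quotient of odd order). *)

(* Defs.v *)
From HB Require Import structures.
From mathcomp Require Import all_boot all_order all_algebra all_fingroup all_solvable.
From mathcomp Require Import reals.
Set Implicit Arguments. Unset Strict Implicit. Unset Printing Implicit Defensive.
Import Order.TTheory GRing.Theory Num.Theory.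

(* Probability that the random product g_0^{e_0} ... g_{k-1}^{e_{k-1}} equals x,
   where e_i ~ Ber(p_i) independently: sum over outcomes e of the product weight. *)
Definition prod_prob (R : realType) (gT : finGroupType) (k : nat)
    (g : 'I_k -> gT) (p : 'I_k -> R) (x : gT) : R :=
  (\sum_(e : {ffun 'I_k -> bool} |
          ((\prod_(i < k) (if e i then g i else 1)) == x)%g)
     \prod_(i < k) (if e i then p i else 1 - p i))%R.

Definition mixable (R : realType) (gT : finGroupType) (G : {group gT}) : Prop :=
  exists (k : nat) (g : 'I_k -> gT) (p : 'I_k -> R),
    [/\ (forall i, g i \in G),
        (forall i, (0 <= p i <= 1)%R) &
        (forall x, x \in G -> prod_prob g p x = (#|G|%:R)^-1)%R].

Definition two'_simple (gT : finGroupType) (G : {group gT}) : Prop :=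
  forall N : {group gT}, (N <| G)%g -> odd #|G : N|%g -> N :=: G.

(* Main.v *)
Require Import Defs.
From HB Require Import structures.
From mathcomp Require Import all_boot all_order all_algebra all_fingroup all_solvable.
From mathcomp Require Import reals.
From Stdlib Require Import Lia.
From mathcomp Require Import zify ring lra.
Set Implicit Arguments. Unset Strict Implicit. Unset Printing Implicit Defensive.
Import Order.TTheory GRing.Theory Num.Theory.
Section Dist.
Local Open Scope ring_scope.
Variable R : realType.
Variable gT : finGroupType.

Fixpoint dist (l : seq (gT * R)) (x : gT) : R :=
  match l with
  | [::] => (x == 1%g)%:R
  | (g, p) :: l' => (1 - p) * dist l' x + p * dist l' (g^-1 * x)%g
  end.

Definition ffcons k (b : bool) (e : {ffun 'I_k -> bool}) : {ffun 'I_k.+1 -> bool} :=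
  [ffun i => if unlift ord0 i is Some j then e j else b].

Definition ffdecons k (e : {ffun 'I_k.+1 -> bool}) : bool * {ffun 'I_k -> bool} :=
  (e ord0, [ffun j => e (lift ord0 j)]).

Lemma ffcons_bij k : bijective (fun be : bool * {ffun 'I_k -> bool} => ffcons be.1 be.2).
Proof.
exists (@ffdecons k).
  case=> b e; rewrite /ffdecons /ffcons /= ffunE unlift_none; congr (_, _).
  by apply/ffunP=> j; rewrite !ffunE liftK.
move=> e; apply/ffunP=> i; rewrite /ffdecons /ffcons ffunE /=.
by case: unliftP=> [j ->|->]; rewrite ?ffunE.
Qed.

Lemma prod_prob_rec k (g : 'I_k.+1 -> gT) (p : 'I_k.+1 -> R) x :
  prod_prob g p x =
  (1 - p ord0) * prod_prob (fun i => g (lift ord0 i)) (fun i => p (lift ord0 i)) x +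
  p ord0 * prod_prob (fun i => g (lift ord0 i)) (fun i => p (lift ord0 i)) ((g ord0)^-1 * x)%g.
Proof.
rewrite /prod_prob big_mkcond /=.
rewrite (reindex _ (onW_bij _ (ffcons_bij k))) /=.
have pb : forall F : bool * {ffun 'I_k -> bool} -> R,
    \sum_q F q = \sum_b \sum_e F (b, e).
  by move=> F; rewrite pair_big; apply: eq_bigr => -[].
rewrite pb big_bool /=.
rewrite addrC; congr (_ + _).
  rewrite (big_mkcond (fun e => _ == _)%g) mulr_sumr; apply: eq_bigr => e _.
  rewrite !big_ord_recl /= /ffcons !ffunE unlift_none mul1g.
  under eq_bigr do rewrite ffunE liftK.
  under [X in _ * X]eq_bigr do rewrite ffunE liftK.
  by case: ifP => _; rewrite ?mulr0.
rewrite (big_mkcond (fun e => _ == _)%g) mulr_sumr; apply: eq_bigr => e _.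
rewrite !big_ord_recl /= /ffcons !ffunE unlift_none.
under eq_bigr do rewrite ffunE liftK.
under [X in _ * X]eq_bigr do rewrite ffunE liftK.
set P := (\prod_(i < k) _)%g.
have -> : ((g ord0 * P)%g == x) = (P == (g ord0)^-1 * x)%g.
  by apply/eqP/eqP=> [<-|->]; rewrite ?mulKg ?mulKVg.
by case: ifP => _; rewrite ?mulr0.
Qed.

Lemma prod_prob_dist k (g : 'I_k -> gT) (p : 'I_k -> R) x :
  prod_prob g p x = dist [seq (g i, p i) | i <- enum 'I_k] x.
Proof.
elim: k g p x => [|k IH] g p x.
  rewrite /prod_prob enum_ord0 /=.
  under eq_bigl do rewrite big_ord0.
  under eq_bigr do rewrite big_ord0.
  rewrite sumr_const eq_sym; case h1: (1 == x)%g => /=.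
    rewrite (@eq_card _ _ (predT : pred {ffun 'I_0 -> bool})) //.
    by rewrite card_ffun card_bool card_ord.
  by rewrite (@eq_card _ _ pred0) ?card0.
rewrite prod_prob_rec enum_ordSl /= -map_comp !IH.
by [].
Qed.


Definition good (l : seq (gT * R)) (G : {set gT}) :=
  all (fun gp => (gp.1 \in G) && (0 <= gp.2 <= 1)) l.
Definition cmass (d : gT -> R) (K : {set gT}) (x : gT) : R :=
  \sum_(z in (x *: K)%g) d z.
Definition unif (l : seq (gT * R)) (G : {set gT}) :=
  forall x, dist l x = (x \in G)%:R / #|G|%:R.

Lemma good_sub l (K G : {set gT}) : K \subset G -> good l K -> good l G.
Proof.
move=> sKG; elim: l => //= -[g p] l IH /= /andP[/andP[gK ->] /IH ->].
by rewrite (subsetP sKG).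
Qed.

Lemma dist_out l (G : {group gT}) x : good l G -> x \notin G -> dist l x = 0.
Proof.
elim: l x => [|[g p] l IH] x /=.
  by move=> _ xG; case: eqP xG => // ->; rewrite group1.
move=> /andP[/andP[gG _] gl] xG; rewrite !IH ?mulr0 ?addr0 //.
by rewrite groupMl ?groupV.
Qed.

Lemma cmass_coset d (K : {set gT}) x y : (x *: K = y *: K)%g -> cmass d K x = cmass d K y.
Proof. by rewrite /cmass => ->. Qed.

Lemma cmass_cons g p l (K : {set gT}) x :
  cmass (dist ((g, p) :: l)) K x =
  (1 - p) * cmass (dist l) K x + p * cmass (dist l) K (g^-1 * x)%g.
Proof.
rewrite /cmass /= big_split /= -!mulr_sumr; congr (_ + _ * _).
rewrite (reindex_inj (mulgI g)) /=; apply: eq_big => [z|z _]; last by rewrite mulKg.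
by rewrite !mem_lcoset invMg invgK !mulgA.
Qed.

Lemma cmass_nil (K : {set gT}) x : cmass (dist [::]) K x = (1%g \in (x *: K)%g)%:R.
Proof.
rewrite /cmass /=; case: (boolP (1%g \in (x *: K)%g)) => h.
  by rewrite (bigD1 1%g) //= eqxx big1 ?addr0 // => z /andP[_ /negbTE ->].
by rewrite big1 // => z zK; case: eqP => // z1; move: h; rewrite -z1 zK.
Qed.

Lemma dist_cat l1 l2 x :
  dist (l1 ++ l2) x = \sum_y dist l1 y * dist l2 (y^-1 * x)%g.
Proof.
elim: l1 x => [|[g p] l1 IH] x /=.
  rewrite (bigD1 1%g) //= eqxx mul1r invg1 mul1g big1 ?addr0 //.
  by move=> y /negbTE ->; rewrite mul0r.
rewrite !IH; under [RHS]eq_bigr do rewrite mulrDl.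
rewrite big_split /= !mulr_sumr; congr (_ + _).
  by apply: eq_bigr => y _; rewrite mulrA.
rewrite [RHS](reindex_inj (mulgI g)) /=; apply: eq_bigr => y _.
by rewrite mulKg invMg !mulgA mulrA.
Qed.

Lemma unif_ext l1 l2 (K G : {group gT}) :
  K \subset G -> good l1 G -> unif l2 K ->
  (forall x, x \in G -> cmass (dist l1) K x = #|K|%:R / #|G|%:R) ->
  unif (l1 ++ l2) G.
Proof.
move=> sKG g1 u2 cm x; rewrite dist_cat.
have -> : \sum_y dist l1 y * dist l2 (y^-1 * x)%g = cmass (dist l1) K x / #|K|%:R.
  rewrite /cmass mulr_suml (big_mkcond (fun y => y \in (x *: K)%g)) /=.
  apply: eq_bigr => y _; rewrite u2 mem_lcoset.
  have -> : ((x^-1 * y)%g \in K) = ((y^-1 * x)%g \in K).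
    by rewrite -groupV invMg invgK.
  by case: ifP => _; rewrite ?mul0r ?mulr0 // mul1r.
have K0 : (#|K|%:R : R) != 0 by rewrite pnatr_eq0 -lt0n cardG_gt0.
case xG: (x \in G).
  by rewrite cm // mulrAC divff // mul1r.
rewrite /cmass big1 ?mul0r // => y yK; apply: (dist_out g1).
apply: contraFN xG => yG; move: yK; rewrite mem_lcoset => yK.
have -> : x = (y * (x^-1 * y)^-1)%g by rewrite invMg invgK mulKVg.
by rewrite groupM // groupV (subsetP sKG).
Qed.


Local Open Scope nat_scope.
Local Open Scope group_scope.

Fixpoint sch (y hh : gT) (m n : nat) : seq (gT * R) :=
  match n with
  | 0 => [::]
  | n'.+1 => ((hh * y ^+ (m - n'.+1))%g, ((m - n')%:R)^-1%R) :: sch y hh m n'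
  end.

Lemma inv_nat01 k : (0 <= (k%:R : R)^-1 <= 1)%R.
Proof.
rewrite invr_ge0 ler0n /=; case: k => [|k]; first by rewrite invr0 ler01.
by rewrite invf_le1 ?ltr0Sn // ler1n.
Qed.

Lemma good_sch (G : {group gT}) y hh m n :
  y \in G -> hh \in G -> good (sch y hh m n) G.
Proof.
move=> yG hG; elim: n => //= n ->; rewrite inv_nat01 groupM ?groupX //.
Qed.

Lemma RS (K G : {group gT}) (y hh : gT) :
  K \subset G -> y \in G -> hh \in G ->
  (forall j, (hh^-1 * y ^+ j)%g \in ((y ^- j) *: K)%g) ->
  (forall x, x \in G -> exists j, x \in (y ^+ j *: K)%g) ->
  exists l1, good l1 G /\
    forall x, x \in G -> cmass (dist l1) K x = (#|K|%:R / #|G|%:R)%R.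
Proof.
move=> sKG yG hG Hh cover.
have ex : exists n, (0 < n) && (y ^+ n \in K).
  by exists #[y]%g; rewrite order_gt0 expg_order group1.
case: (ex_minnP ex) => m /andP[m0 ymK] mmin.
have ymin : forall n, 0 < n -> n < m -> y ^+ n \notin K.
  move=> n n0 nm; apply/negP => ynK.
  by have := mmin n; rewrite n0 ynK => /(_ isT); rewrite leqNgt nm.
have ymq : forall q, y ^+ (m * q) \in K by move=> q; rewrite expgM groupX.
have Lmod : forall a, (y ^+ a *: K)%g = (y ^+ (a %% m) *: K)%g.
  move=> a; rewrite {1}(divn_eq a m) addnC expgD lcosetM mulnC lcoset_id //.
have HhN : forall t s, m %| t + s -> (y ^- t *: K)%g = (y ^+ s *: K)%g.
  move=> t s /dvdnP[q tsq]; apply/lcoset_eqP; rewrite mem_lcoset -invMg -expgD.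
  by rewrite groupV tsq mulnC ymq.
have Hc : forall j, ((hh^-1 * y ^+ j) *: K)%g = (y ^- j *: K)%g.
  by move=> j; apply/lcoset_eqP.
pose M : R := m%:R.
have M0 : (M != 0)%R by rewrite pnatr_eq0 -lt0n.
pose f n j : R := if j == 0 then ((m - n)%:R / M)%R else if j <= n then M^-1%R else 0%R.
have inv : forall n, n < m -> forall j, j < m ->
    cmass (dist (sch y hh m n)) K (y ^+ j) = f n j.
  elim=> [|n IH] nm j jm.
    rewrite cmass_nil mem_lcoset mulg1 groupV /f subn0 leqn0.
    case: (posnP j) => [->|j0]; first by rewrite expg0 group1 /M divff.
    by rewrite (negbTE (ymin j j0 jm)).
  rewrite /= cmass_cons (IH (ltnW nm)) //.
  have key : cmass (dist (sch y hh m n)) K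
      ((hh * y ^+ (m - n.+1))^-1 * y ^+ j)%g =
      f n (if j <= n.+1 then n.+1 - j else n.+1 + m - j).
    rewrite invMg -mulgA; rewrite (@cmass_coset _ _ _ (y ^+ (if j <= n.+1 then n.+1 - j else n.+1 + m - j))).
      by rewrite IH ?(ltnW nm) //; case: ifP => jn; lia.
    rewrite lcosetM Hc -lcosetM -invMg -expgD; apply: HhN.
    case: ifP => jn.
      by apply/dvdnP; exists 1%N; lia.
    by apply/dvdnP; exists 2%N; lia.
  rewrite key /f {key IH}.
  have um : (m - n)%:R = ((m - n.+1)%:R + 1)%R :> R.
    by rewrite natr1; congr (_%:R); lia.
  have u0 : (m - n)%:R != 0%R :> R by rewrite pnatr_eq0; lia.
  case: (posnP j) => [->|j0].
    rewrite leq0n subn0 /= ltnn mulr0 addr0 um; field.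

    by rewrite -um u0 M0.
  case: (leqP j n) => jn.
    rewrite (_ : j <= n.+1 = true); last lia.
    rewrite (_ : (n.+1 - j == 0) = false); last lia.
    rewrite (_ : (n.+1 - j <= n) = true); last lia.
    by rewrite -mulrDl subrK mul1r.
  case: (eqVneq j n.+1) => [->|jn1].
    rewrite ltnSn subnn eqxx mulr0 add0r.
    by field; rewrite u0 M0.
  rewrite (_ : j <= n.+1 = false); last lia.
  rewrite (_ : (n.+1 + m - j == 0) = false); last lia.
  rewrite (_ : (n.+1 + m - j <= n) = false); last lia.
  by rewrite !mulr0 addr0.
have cardG : #|G| = (#|K| * m)%N.
  rewrite -(Lagrange sKG) -card_lcosets; congr (_ * _)%N.
  have -> : lcosets K G = [set (y ^+ (val i) *: K)%g | i : 'I_m].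
    apply/eqP; rewrite eqEsubset; apply/andP; split; apply/subsetP => X.
      case/lcosetsP => x xG ->; case: (cover x xG) => j /lcoset_eqP ->.
      by rewrite Lmod; apply/imsetP; exists (Ordinal (ltn_pmod j m0)).
    by case/imsetP => i _ ->; apply/lcosetsP; exists (y ^+ i)%g; rewrite ?groupX.
  rewrite card_imset ?card_ord // => i i' /= eqii'.
  apply/val_inj => /=; apply/eqP; apply: contraTT isT => ne.
  wlog lt : i i' eqii' ne / (i < i')%N.
    move=> W; case: (ltngtP i i') => [lt|lt|eq]; first exact: W lt.
      by apply: (W i' i) => //; rewrite eq_sym.
    by rewrite eq (eqxx (val i')) in ne.
  have : (y ^+ i' \in y ^+ i *: K)%g by rewrite eqii' mem_lcoset mulVg group1.
  rewrite mem_lcoset (_ : y ^+ i' = y ^+ i * y ^+ (i' - i))%g ?mulKg.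
    by rewrite (negbTE (ymin _ _ _)) //; [rewrite subn_gt0 | move: (ltn_ord i'); lia].
  by rewrite -expgD subnKC // ltnW.
exists (sch y hh m m.-1); split; first exact: good_sch.
move=> x xG; case: (cover x xG) => j /lcoset_eqP jK.
rewrite (cmass_coset _ jK) (cmass_coset _ (Lmod j)) inv ?ltn_pmod //; last lia.
rewrite cardG natrM /f.
have K0 : (#|K|%:R : R) != 0%R by rewrite pnatr_eq0 -lt0n cardG_gt0.
case: eqP => _.
  rewrite (_ : (m - m.-1) = 1%N); last lia.
  by rewrite /M; field; rewrite K0 M0.

rewrite ifT; last by rewrite -ltnS prednK // ltn_pmod.
by field; rewrite K0 M0.
Qed.


Lemma expg_index_mem (G N : {group gT}) g :
  N <| G -> g \in G -> g ^+ #|G : N| \in N.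
Proof.
case/andP=> sNG nNG gG; have gN := subsetP nNG g gG.
apply: coset_idr; first by rewrite groupX.
rewrite morphX // -card_quotient //; apply: expg_cardG; exact: mem_quotient.
Qed.

Lemma no_odd_quot (G N : {group gT}) l :
  good l G -> N <| G -> odd #|G : N| -> N :<>: G ->
  (forall x, x \in G -> dist l x = (#|G|%:R)^-1%R) -> False.
Proof.
move=> gl nN oddN neNG unif.
have /andP[sNG nNG] := nN.
pose c : R := (#|N|%:R / #|G|%:R)%R.
have cm0 : forall x, x \in G -> cmass (dist l) N x = c.
  move=> x xG; rewrite /cmass (eq_bigr (fun _ => (#|G|%:R)^-1%R)).
    rewrite sumr_const; change ((#|G|%:R^-1 *+ #|(x *: N)%g|)%R = c).
    by rewrite card_lcoset /c mulr_natl.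
  move=> z zN; apply: unif; move: zN; rewrite mem_lcoset => zN.
  have -> : z = x * (x^-1 * z) by rewrite mulKVg.
  by rewrite groupM // (subsetP sNG).
clear unif; elim: l gl cm0 => [|[g p] l IH] /=.
  move=> _ /(_ 1 (group1 G)); rewrite cmass_nil lcoset1 group1 => h.
  have h1 : (1%R : R) = c by rewrite -h.
  have : ((#|G|%:R : R) * c)%R = #|N|%:R.
    by rewrite /c mulrC divfK // pnatr_eq0 -lt0n cardG_gt0.
  rewrite -h1 mulr1.
  move/eqP; rewrite eqr_nat => /eqP eqc; apply: neNG; apply/eqP.
  by rewrite eqEcard sNG eqc leqnn.
case/andP=> /andP[gG /andP[p0 p1]] gl cm.
apply: IH => // x xG.
pose nu w := (cmass (dist l) N w - c)%R.
have E : forall w, w \in G -> ((1 - p) * nu w + p * nu (g^-1 * w)%g = 0)%R.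
  move=> w wG; have := cm w wG; rewrite cmass_cons /nu => h.
  rewrite -[RHS](subrr c) -[X in (_ = X - _)%R]h; ring.
suff : nu x = 0%R by rewrite /nu => /eqP; rewrite subr_eq0 => /eqP.
have [pz|pn0] := eqVneq p 0%R.
  by have := E x xG; rewrite pz subr0 mul1r mul0r addr0.
have pp : (0 < p)%R by rewrite lt0r pn0.
pose a : R := ((1 - p) / p)%R.
have a0 : (0 <= a)%R by rewrite divr_ge0 // subr_ge0.
have step : forall w, w \in G -> nu (g^-1 * w) = (- a * nu w)%R.
  move=> w wG; have := E w wG; rewrite /a => /eqP; rewrite addrC addr_eq0 => /eqP h.
  by apply: (mulfI pn0); rewrite h; field.
have iter : forall n w, w \in G -> nu ((g^-1) ^+ n * w) = ((- a) ^+ n * nu w)%R.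
  move=> n; elim: n => [|n IHn] w wG; first by rewrite expg0 mul1g expr0 mul1r.
  by rewrite expgS -mulgA step ?groupM ?groupX ?groupV // IHn // exprS mulrA.
have dN := expg_index_mem nN (groupVr gG).
have cyc : nu ((g^-1) ^+ #|G : N| * x) = nu x.
  rewrite /nu (@cmass_coset _ _ _ x) //.
  rewrite conjgC lcosetM lcoset_id // memJ_norm // (subsetP nNG) //.
have := iter #|G : N| x xG; rewrite cyc exprNn -signr_odd oddN expr1 mulN1r.
move=> h; have : ((1 + a ^+ #|G : N|) * nu x = 0)%R.
  by rewrite mulrDl mul1r {1}h mulNr addNr.
move/eqP; rewrite mulf_eq0 => /orP[|/eqP //].
by rewrite gt_eqF // ltr_pwDl ?ltr01 ?exprn_ge0.
Qed.


Lemma nconj (X : {group gT}) a : X :^ a \subset X -> a \in 'N(X).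
Proof. by move=> s; apply/normP/eqP; rewrite eqEcard s cardJg leqnn. Qed.

Definition Tm (X : {set gT}) := exists l, good l X /\ unif l X.

Lemma step_ext (K G' : {group gT}) (l2 : seq (gT * R)) y hh :
  K \subset G' -> y \in G' -> hh \in G' ->
  (forall j, hh^-1 * y ^+ j \in y ^- j *: K) ->
  (forall x, x \in G' -> exists j, x \in y ^+ j *: K) ->
  good l2 K -> unif l2 K -> Tm G'.
Proof.
move=> sKG yG hG Hh cov g2 u2.
have [l1 [g1 c1]] := RS sKG yG hG Hh cov.
exists (l1 ++ l2); split; last exact: (unif_ext sKG g1 u2 c1).
by rewrite /good all_cat; apply/andP; split; [exact: g1 | exact: good_sub g2].
Qed.

Lemma construct (A H G : {group gT}) :
  abelian A -> #|H| = 2 -> (A ><| H) = G -> two'_simple G -> Tm G.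
Proof.
move=> abA cH defG simG.
have [_ AH nAH tiAH] := sdprodP defG.
have sAG : A \subset G by rewrite -AH mulG_subl.
have sHG : H \subset G by rewrite -AH mulG_subr.
have [h hH h1] : exists2 h, h \in H & h != 1.
  apply/trivgPn; rewrite trivg_card1 cH //.
have oh : #[h] = 2.
  have : #[h] %| 2 by rewrite -cH order_dvdG.
  have : 1 < #[h] by rewrite order_gt1.
  move=> gt1 /(dvdn_leq (isT : 0 < 2)); lia.
have Hh : H :=: <[h]>.
  apply/eqP; rewrite eq_sym eqEcard cycle_subG hH /= -/(#[h]) oh cH //.
have h2 : h ^+ 2 = 1 by rewrite -oh expg_order.
have hh1 : h * h = 1 by rewrite -h2 expgS expg1.
have nAh : h \in 'N(A) by rewrite (subsetP nAH).
have nHh : H \subset 'N(<[h]>) by rewrite Hh normG.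
pose T (D : {set gT}) := Tm (D <*> H).
have base : T 1.
  rewrite /T joing1G.
  have sub1 : (1%G : {group gT}) \subset H by rewrite sub1G.
  apply: (@step_ext 1%G H [::] h 1) => //.
  - move=> j; rewrite mem_lcoset invg1 mul1g invgK -expgD addnn -mul2n expgM.
    by rewrite h2 expg1n group1.
  - move=> x; rewrite Hh => /cycleP[j ->]; exists j.
    by rewrite mem_lcoset mulVg group1.
  - move=> x; rewrite /= inE cards1 divr1; by case: (x == 1).
have cAA : A \subset 'C(A) by [].
have step : forall D : {group gT}, D \subset A -> h \in 'N(D) -> D :<>: A -> T D ->
    exists D' : {group gT}, [/\ D' \subset A, h \in 'N(D'), #|D| < #|D'| & T D'].
  move=> D sDA nDh neDA [l2 [g2 u2]].
  pose K := (D <*> H)%G.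
  have hK : h \in K by rewrite /K /= mem_gen // inE hH orbT.
  have nDH : H \subset 'N(D) by rewrite Hh cycle_subG.
  have [y [hh [yA yD yh hhK Hhy]]] : exists y hh, [/\ y \in A, y \notin D,
      y ^ h \in D <*> <[y]>, hh \in K &
      forall j, hh^-1 * y ^+ j \in y ^- j *: K].
    have conjA : forall x, x \in A -> x ^ h \in A by move=> x xA; rewrite memJ_norm.
    have cDA : A \subset 'C(D) := sub_abelian_cent abA sDA.
    case: (boolP [exists x in A, x^-1 * x ^ h \notin D]).
      case/exists_inP=> x xA xD; exists (x^-1 * x ^ h), h.
      have yinv : (x^-1 * x ^ h) ^ h = (x^-1 * x ^ h)^-1.
        by rewrite conjMg conjVg -conjgM hh1 conjg1 [RHS]invMg invgK.
      split => //.
      - by rewrite groupM ?groupV ?conjA.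
      - by rewrite yinv groupV mem_gen // inE cycle_id orbT.
      move=> j; rewrite mem_lcoset invgK.
      have -> : h^-1 * (x^-1 * x ^ h) ^+ j = ((x^-1 * x ^ h) ^+ j) ^ h * h^-1.
        by rewrite [_ ^+ j ^ h]conjgE -mulgA mulgK.
      by rewrite conjXg yinv expVgn mulKVg groupV.
    move/exists_inPn => hall.
    have {}hall : forall x, x \in A -> x^-1 * x ^ h \in D.
      by move=> x xA; have := hall x xA; rewrite negbK.
    have nDA : A \subset 'N(D) := cents_norm cDA.
    have even : ~~ odd #|A : D|.
      apply/negP => oddAD.
      have nN : (D <*> H)%G <| G.
        apply/andP; split.
          by rewrite join_subG (subset_trans sDA sAG) sHG.
        rewrite -AH mul_subG //; last by rewrite normsY // normG.
        apply/subsetP => a aA; apply: nconj.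
        rewrite /= conjYg (normP (subsetP nDA a aA)) join_subG joing_subl /=.
        rewrite Hh -cycleJ cycle_subG.
        have -> : h ^ a = h * ((a^-1)^-1 * (a^-1) ^ h).
          rewrite invgK ((centsP abA) a aA _ (conjA _ (groupVr aA))).
          by rewrite !conjgE !mulgA mulgV mul1g.
        rewrite groupM //; first by rewrite mem_gen // inE cycle_id orbT.
        by rewrite mem_gen // inE hall ?groupV.
      have tiDH : D :&: H = 1.
        by apply/trivgP; rewrite -tiAH setSI.
      have sDHG : D <*> H \subset G by rewrite join_subG (subset_trans sDA sAG) sHG.
      have idx : #|G : D <*> H| = #|A : D|.
        rewrite -(divgS sDHG) -(divgS sDA) -AH (TI_cardMg tiAH) /= (norm_joinEr nDH).
        by rewrite (TI_cardMg tiDH) divnMr // cardG_gt0.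
      have := simG _ nN; rewrite idx => /(_ oddAD) eqG.
      apply: neDA; apply/eqP; rewrite eqEcard sDA /=.
      have := congr1 (fun X : {set gT} => #|X|) eqG.
      rewrite /= (norm_joinEr nDH) (TI_cardMg tiDH) -AH (TI_cardMg tiAH) => /eqP.
      by rewrite eqn_pmul2r ?cardG_gt0 // => /eqP ->.
    have [X XAD oX] : {X | X \in A / D & #[X] = 2}.
      by apply: Cauchy => //; rewrite card_quotient // dvdn2.
    case/morphimP: XAD => w wN wA defX.
    have w2 : w ^+ 2 \in D.
      apply: coset_idr; first by rewrite groupX.
      by rewrite morphX // -defX -oX expg_order.
    have wD : w \notin D.
      by apply/negP => wD; move: oX; rewrite defX /= coset_id // order1.
    exists w, 1; split => //.
    - rewrite -(mulKVg w (w ^ h)) groupM // ?mem_gen // ?inE ?cycle_id ?orbT //.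
      by rewrite hall.
    move=> j; rewrite mem_lcoset invg1 mul1g invgK -expgD addnn -mul2n expgM.
    by rewrite groupX // (subsetP (joing_subl _ _)).
  pose D' := (D <*> <[y]>)%G.
  have sD'A : D' \subset A by rewrite join_subG sDA cycle_subG yA.
  have nD'h : h \in 'N(D').
    apply: nconj; rewrite /= conjYg (normP nDh) -cycleJ join_subG joing_subl.
    by rewrite cycle_subG.
  exists D'; split => //.
    apply: proper_card; apply/properP; split; first exact: joing_subl.
    by exists y => //; rewrite /= mem_gen // inE cycle_id orbT.
  have nD'H : H \subset 'N(D') by rewrite Hh cycle_subG.
  have sKG' : K \subset D' <*> H.
    by rewrite join_subG (subset_trans (joing_subl D <[y]>) (joing_subl _ _)) joing_subr.
  apply: (@step_ext K (D' <*> H)%G l2 y hh) => //.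
  - by rewrite (subsetP (joing_subl _ _)) //= mem_gen // inE cycle_id orbT.
  - exact: (subsetP sKG').
  - have nDy : <[y]> \subset 'N(D).
      by apply: cents_norm; rewrite (subset_trans _ (sub_abelian_cent abA sDA)) // cycle_subG.
    move=> x xG; have : x \in D' * H by rewrite -(norm_joinEr nD'H).
    case/mulsgP=> u v uD' vH ->.
    have : u \in D * <[y]> by rewrite -(norm_joinEr nDy).
    case/mulsgP=> d c dD /cycleP[j ->] ->.
    exists j; rewrite mem_lcoset.
    have dA : d \in A := subsetP sDA d dD.
    have yjA : y ^+ j \in A by rewrite groupX.
    rewrite mulgA ((centsP abA) d dA (y ^+ j) yjA) !mulgA mulVg mul1g.
    by rewrite groupM // /K /= mem_gen // inE ?dD ?vH ?orbT.
have main : forall n (D : {group gT}), #|A| - #|D| <= n -> D \subset A ->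
    h \in 'N(D) -> T D -> T A.
  elim=> [|n IHn] D le sDA nDh TD.
    have eqDA : D :=: A.
      by apply/eqP; rewrite eqEcard sDA /=; move: le; rewrite leqn0 subn_eq0.
    by move: TD; rewrite /T eqDA.
  case: (eqVneq (D : {set gT}) A) => [eqDA|neDA]; first by move: TD; rewrite /T eqDA.
  have neDA' : D :<>: A by apply/eqP.
  have [D' [sD'A nD'h ltD TD']] := step D sDA nDh neDA' TD.
  apply: (IHn D') => //.
  have := subset_leq_card sD'A; move: ltD le; clear; lia.
have := main #|A| 1%G (leq_subr _ _) (sub1G _) (subsetP (norms1 _) h (in_setT h)) base.
by rewrite /T (sdprodWY defG).
Qed.

End Dist.

Unset Implicit Arguments. Set Strict Implicit.

Theorem mainTheorem19 (R : realType) (gT : finGroupType) (G A H : {group gT}) :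
  abelian A -> #|H| = 2 -> (A ><| H)%g = G ->
  (mixable R G <-> two'_simple G).
Proof.
move=> abA cH defG; split.
  case=> k [g [p [gG p01 unifG]]] N nN oddN.
  case: (eqVneq (N : {set gT}) G) => [//|ne]; exfalso.
  apply: (@no_odd_quot R gT G N [seq (g i, p i) | i <- enum 'I_k]) => //.
  - by rewrite /good all_map; apply/allP => i _ /=; rewrite gG p01.
  - by apply/eqP.
  - by move=> x xG; rewrite -prod_prob_dist unifG.
move=> simG; have [l [gl ul]] := @construct R gT A H G abA cH defG simG.
pose x0 : gT * R := (1%g, 0%R).
have El : [seq ((nth x0 l i).1, (nth x0 l i).2) | i : 'I_(size l) <- enum 'I_(size l)] = l.
  rewrite (eq_map (g := fun i : 'I_(size l) => nth x0 l i)); last by move=> i; case: (nth x0 l i).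
  by rewrite (map_comp (nth x0 l) val) val_enum_ord -/(mkseq _ _) mkseq_nth.
exists (size l), (fun i => (nth x0 l i).1), (fun i => (nth x0 l i).2); split.
- move=> i; have := allP gl (nth x0 l i) (mem_nth _ (ltn_ord i)).
  by case/andP.
- move=> i; have := allP gl (nth x0 l i) (mem_nth _ (ltn_ord i)).
  by case/andP.
- by move=> x xG; rewrite prod_prob_dist El ul xG GRing.mul1r.
Qed.
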